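(* In the setting of the construction below, if $a_{ii}\not\equiv0\pmod n$ for some $i$, then the associator $\Phi$ of $A$ is nontrivial, and the quasi-Hopf algebra $A$ (with coproduct $\Delta_{\mathbb J}$ and associator $\Phi$) is not twist equivalent to a Hopf algebra.
   Context: Setting: $n\ge2$, $q$ a primitive root of unity of order $n^2$, $m\ge1$; $H$ a finite dimensional Hopf algebra over $\mathbb{C}$ generated by grouplike $g_1,\dots,g_m$ and $e_1,\dots,e_m$ with $g_i^{n^2}=1$, $g_ig_j=g_jg_i$, $g_ie_jg_i^{-1}=q^{\delta_{ij}}e_j$, $\Delta(e_i)=e_i\otimes K_i+1\otimes e_i$, $K_i=\prod_jg_j^{a_{ij}}$, $a_{ij}\in\mathbb{Z}_{n^2}$; $H$ admits a Hopf algebra projection onto $\mathbb{C}[(\mathbb{Z}_{n^2})^m]$ via $g_i\mapsto g_i$, $e_i\mapsto0$. $A\subset H$ is the subalgebra generated by the $g_i^n$ and $e_i$. With $1_\beta$ the primitive idempotents of $\mathbb{C}[g_1,\dots,g_m]$ ($1_\beta g_i=q^{\beta_i}1_\beta$), $c(z,y)=q^{-z(y-y')}$ ($z,y\in\{0,\dots,n^2-1\}$, $y'$ = remainder of $y$ mod $n$), $\mathbb J=\sum_{\beta,\gamma}\prod_{i,j}c(\beta_i,\gamma_j)^{a_{ij}}1_\beta\otimes1_\gamma$, $\Delta_{\mathbb J}(z)=\mathbb J\Delta(z)\mathbb J^{-1}$, and $\Phi=(1\otimes\mathbb J)(\mathrm{id}\otimes\Delta)(\mathbb J)(\Delta\otimes\mathrm{id})(\mathbb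 J^{-1})(\mathbb J^{-1}\otimes1)$. It is known (and may be assumed) that $A$ with $\Delta_{\mathbb J}$ and $\Phi$ is a quasi-Hopf algebra. Twist equivalence means isomorphism after twisting by an invertible element of $A\otimes A$. *)

(* Defs.v *)
(* Finite-dimensional Hopf algebras over C (= algC) are
   encoded by structure constants with respect to a basis indexed by 'I_d.
   Elements of H, H⊗H, H⊗H⊗H are coordinate functions on basis indices. *)
From HB Require Import structures.
From mathcomp Require Import all_boot all_order all_algebra.
From mathcomp Require Import algC.
Set Implicit Arguments. Unset Strict Implicit. Unset Printing Implicit Defensive.
Import Order.TTheory GRing.Theory Num.Theory.
Local Open Scope ring_scope.

(* Structure constants of an algebra/coalgebra with antipode on basis b_0..b_{d-1}:
   b_i b_j = sum_k mu i j k b_k,  1 = sum_k un k b_k,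
   Delta b_i = sum_{j,k} cop i j k b_j ⊗ b_k,  eps b_i = cou i,
   S b_i = sum_j ant i j b_j. *)
Definition scl (T : finType) (c : algC) (x : {ffun T -> algC}) : {ffun T -> algC} :=
  [ffun k => c * x k].

Record HData (d : nat) := {
  hmu  : 'I_d -> 'I_d -> 'I_d -> algC;
  hun  : 'I_d -> algC;
  hcop : 'I_d -> 'I_d -> 'I_d -> algC;
  hcou : 'I_d -> algC;
  hant : 'I_d -> 'I_d -> algC }.

Section Hopf.
Variables (d : nat) (D : HData d).

(* H, H⊗H, H⊗H⊗H in coordinates (NB: never use the pointwise ring
   structure of ffun; only + and *: are used). *)
Local Notation H1 := {ffun 'I_d -> algC}.
Local Notation H2 := {ffun 'I_d * 'I_d -> algC}.
Local Notation H3 := {ffun 'I_d * 'I_d * 'I_d -> algC}.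

Definition bvec (a : 'I_d) : H1 := [ffun k => (k == a)%:R].

Definition mulH (x y : H1) : H1 :=
  [ffun k => \sum_i \sum_j x i * y j * hmu D i j k].
Definition oneH : H1 := [ffun k => hun D k].
Definition powH (x : H1) (k : nat) : H1 := iter k (mulH x) oneH.

Definition tens2 (x y : H1) : H2 := [ffun p => x p.1 * y p.2].
Definition tens3 (x y z : H1) : H3 := [ffun p => x p.1.1 * y p.1.2 * z p.2].
Definition mul2 (X Y : H2) : H2 :=
  [ffun p => \sum_a \sum_b X a * Y b * hmu D a.1 b.1 p.1 * hmu D a.2 b.2 p.2].
Definition mul3 (X Y : H3) : H3 :=
  [ffun p => \sum_a \sum_b X a * Y b * hmu D a.1.1 b.1.1 p.1.1
                * hmu D a.1.2 b.1.2 p.1.2 * hmu D a.2 b.2 p.2].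
Definition one2 : H2 := tens2 oneH oneH.
Definition one3 : H3 := tens3 oneH oneH oneH.

Definition tens1l (X : H2) : H3 := [ffun p => oneH p.1.1 * X (p.1.2, p.2)].
Definition tens1r (X : H2) : H3 := [ffun p => X p.1 * oneH p.2].

Definition DeltaH (x : H1) : H2 := [ffun p => \sum_a x a * hcop D a p.1 p.2].
Definition epsH (x : H1) : algC := \sum_a x a * hcou D a.
Definition antH (x : H1) : H1 := [ffun k => \sum_a x a * hant D a k].

(* linear extensions f ⊗ id and id ⊗ f of a linear map f : H -> H⊗H,
   determined by the values of f on the basis *)
Definition tens_id (f : H1 -> H2) (X : H2) : H3 :=
  [ffun p => \sum_a X (a, p.2) * f (bvec a) p.1].
Definition id_tens (f : H1 -> H2) (X : H2) : H3 :=
  [ffun p => \sum_a X (p.1.1, a) * f (bvec a) (p.1.2, p.2)].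

Definition eps_id (X : H2) : H1 := [ffun k => \sum_a X (a, k) * hcou D a].
Definition id_eps (X : H2) : H1 := [ffun k => \sum_a X (k, a) * hcou D a].
Definition mS_id (X : H2) : H1 :=
  [ffun k => \sum_a \sum_b X (a, b) * mulH (antH (bvec a)) (bvec b) k].
Definition m_idS (X : H2) : H1 :=
  [ffun k => \sum_a \sum_b X (a, b) * mulH (bvec a) (antH (bvec b)) k].

Definition is_hopf : Prop :=
  (forall x y z, mulH (mulH x y) z = mulH x (mulH y z)) /\
  (forall x, mulH oneH x = x /\ mulH x oneH = x) /\
  (forall x, tens_id DeltaH (DeltaH x) = id_tens DeltaH (DeltaH x)) /\
  (forall x, eps_id (DeltaH x) = x /\ id_eps (DeltaH x) = x) /\
  (forall x y, DeltaH (mulH x y) = mul2 (DeltaH x) (DeltaH y)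
               /\ epsH (mulH x y) = epsH x * epsH y) /\
  (DeltaH oneH = one2 /\ epsH oneH = 1) /\
  (forall x, mS_id (DeltaH x) = scl (epsH x) oneH
             /\ m_idS (DeltaH x) = scl (epsH x) oneH).

Definition grouplike (g : H1) : Prop := g != 0 /\ DeltaH g = tens2 g g.

Definition in_subalg (S : H1 -> Prop) (x : H1) : Prop :=
  forall P : H1 -> Prop,
    P oneH ->
    (forall y z, P y -> P z -> P (y + z)) ->
    (forall (c : algC) y, P y -> P (scl c y)) ->
    (forall s y, S s -> P y -> P (mulH s y)) ->
    P x.

Definition in_tens2 (B : H1 -> Prop) (X : H2) : Prop :=
  exists s : seq (H1 * H1), (forall p, p \in s -> B p.1 /\ B p.2) /\
    X = \sum_(p <- s) tens2 p.1 p.2.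

End Hopf.
Notation H1 d := {ffun 'I_d -> algC}.
Notation H2 d := {ffun 'I_d * 'I_d -> algC}.
Notation H3 d := {ffun 'I_d * 'I_d * 'I_d -> algC}.


(* The group algebra C[(Z_N)^m] (N = n^2), with elements {ffun G -> algC},
   convolution product, Delta(t) = t ⊗ t, eps(t) = 1. *)
Section GroupAlg.
Variables (N m : nat).
Local Notation GrpZ := {ffun 'I_m -> 'Z_N}.
Local Notation GA := {ffun GrpZ -> algC}.
Definition ga_mul (x y : GA) : GA := [ffun t : GrpZ => \sum_(s : GrpZ) x s * y (t - s)].
Definition ga_delta (t : GrpZ) : GA := [ffun s => (s == t)%:R].
Definition ga_gen (i : 'I_m) : GrpZ := [ffun j => (i == j)%:R].
Definition ga_eps (x : GA) : algC := \sum_t x t.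
End GroupAlg.
Notation GrpZ N m := {ffun 'I_m -> 'Z_N}.
Notation GA N m := {ffun GrpZ N m -> algC}.

Section Construction.
Variables (d : nat) (D : HData d) (n m : nat) (q : algC).
Variables (g : 'I_m -> H1 d) (a : 'I_m -> 'I_m -> 'I_(n ^ 2)).

Definition Kel (i : 'I_m) : H1 d :=
  \big[mulH D/oneH D]_(j < m) powH D (g j) (a i j).

Definition pi_of (piB : 'I_d -> GrpZ (n ^ 2) m -> algC) (x : H1 d) :
  GA (n ^ 2) m := [ffun t => \sum_k x k * piB k t].

Definition hopf_projection (e : 'I_m -> H1 d)
    (piB : 'I_d -> GrpZ (n ^ 2) m -> algC) : Prop :=
  let pi := pi_of piB in
  (forall x y, pi (mulH D x y) = ga_mul (pi x) (pi y)) /\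
  pi (oneH D) = ga_delta (0 : GrpZ (n ^ 2) m) /\
  (forall x s t, \sum_k \sum_l DeltaH D x (k, l) * piB k s * piB l t
                 = (s == t)%:R * pi x s) /\
  (forall x, ga_eps (pi x) = epsH D x) /\
  (forall i, pi (g i) = ga_delta (@ga_gen (n ^ 2) m i)) /\
  (forall i, pi (e i) = 0).

(* primitive idempotents 1_beta of C[g_1,...,g_m] (1_beta g_i = q^beta_i 1_beta) *)
Definition idem (beta : 'I_m -> 'I_(n ^ 2)) : H1 d :=
  \big[mulH D/oneH D]_(i < m)
     (scl (n ^ 2)%:R^-1 (\sum_(k < n ^ 2) scl (q ^- (beta i * k)) (powH D (g i) k))).

Definition cfun (z y : nat) : algC := q ^- (z * (y - y %% n)).

Definition Jel : H2 d :=
  \sum_(beta : {ffun 'I_m -> 'I_(n ^ 2)}) \sum_(gamma : {ffun 'I_m -> 'I_(n ^ 2)})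
    scl (\prod_(i < m) \prod_(j < m) cfun (beta i) (gamma j) ^+ a i j)
        (tens2 (idem beta) (idem gamma)).

Variable Jinv : H2 d.

Definition DeltaJ (x : H1 d) : H2 d := mul2 D (mul2 D Jel (DeltaH D x)) Jinv.

Definition Phi : H3 d :=
  mul3 D (mul3 D (mul3 D (tens1l D Jel) (id_tens (DeltaH D) Jel))
                 (tens_id (DeltaH D) Jinv))
         (tens1r D Jinv).

Definition twistPhi (F Finv : H2 d) : H3 d :=
  mul3 D (mul3 D (mul3 D (mul3 D (tens1l D F) (id_tens DeltaJ F)) Phi)
                 (tens_id DeltaJ Finv))
         (tens1r D Finv).

End Construction.

(* Main.v *)
Require Import Defs.
From mathcomp Require Import all_boot all_order all_algebra.
From mathcomp Require Import algC.
From mathcomp Require Import ring.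
Set Implicit Arguments. Unset Strict Implicit. Unset Printing Implicit Defensive.
Import GRing.Theory Num.Theory.
Local Open Scope ring_scope.

Section Eval.
Variables (d : nat) (D : HData d) (n m : nat) (q : algC).
Hypothesis HN : (1 < n ^ 2)%N.
Hypothesis Hq : (n ^ 2).-primitive_root q.
Variable piB : 'I_d -> GrpZ (n ^ 2) m -> algC.
Variable i0 : 'I_m.
Local Notation PI := (Defs.pi_of piB).
Hypothesis pimul : forall x y, PI (mulH D x y) = ga_mul (PI x) (PI y).
Hypothesis pione : PI (oneH D) = ga_delta (0 : GrpZ (n ^ 2) m).

Definition chi (x : nat) (t : GrpZ (n ^ 2) m) : algC := q ^+ (x * t i0).

Lemma qN : q ^+ (n ^ 2) = 1.
Proof. exact: prim_expr_order Hq. Qed.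

Lemma qmodZ x a b :
  q ^+ (x * ((a + b) %% (Zp_trunc (n ^ 2)).+2)) = q ^+ (x * a) * q ^+ (x * b).
Proof.
by rewrite Zp_cast // -(prim_expr_mod Hq (x * _)%N) modnMmr prim_expr_mod // -exprD mulnDr.
Qed.

Lemma chiD x s t : chi x (s + t) = chi x s * chi x t.
Proof.
by rewrite /chi ffunE /= qmodZ.
Qed.

Lemma chi0 x : chi x 0 = 1.
Proof. by rewrite /chi ffunE /= muln0 expr0. Qed.

Definition w_def x k := \sum_t piB k t * chi x t.
Fact w_key : unit. Proof. by []. Qed.
Definition w := locked_with w_key w_def.
Lemma wE x k : w x k = \sum_t piB k t * chi x t.
Proof. by rewrite /w unlock. Qed.
Definition phi x (h : H1 d) := \sum_k h k * w x k.

Lemma phi_pi x h : phi x h = \sum_t PI h t * chi x t.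
Proof.
rewrite /phi. under eq_bigr do rewrite wE mulr_sumr.
rewrite exchange_big /=; apply: eq_bigr => t _.
rewrite ffunE mulr_suml; apply: eq_bigr => k _ /=; by rewrite mulrA.
Qed.

Lemma phiM x u v : phi x (mulH D u v) = phi x u * phi x v.
Proof.
rewrite !phi_pi pimul /ga_mul.
under eq_bigr do rewrite ffunE mulr_suml.
rewrite exchange_big mulr_suml /=; apply: eq_bigr => s _.
rewrite (reindex_inj (addIr s)) /= mulr_sumr /=; apply: eq_bigr => t _.
by rewrite addrK addrC chiD; rewrite !mulrA; congr (_ * _); rewrite mulrAC.
Qed.

Lemma phi1 x : phi x (oneH D) = 1.
Proof.
rewrite phi_pi pione /ga_delta (bigD1 (0 : GrpZ (n ^ 2) m)) //= big1 => [|t /negbTE Ht].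
  by rewrite ffunE eqxx mul1r chi0 addr0.
by rewrite ffunE Ht mul0r.
Qed.


Lemma sum_pairE (I J : finType) (F : I * J -> algC) :
  \sum_p F p = \sum_i \sum_j F (i, j).
Proof. by rewrite pair_big; apply: eq_bigr => -[]. Qed.

Lemma bvec_suml (i : 'I_d) (f : 'I_d -> algC) : \sum_a bvec i a * f a = f i.
Proof.
rewrite (bigD1 i) //= big1 => [|a /negbTE Ha]; first by rewrite ffunE eqxx mul1r addr0.
by rewrite ffunE Ha mul0r.
Qed.

Lemma phiD x u v : phi x (u + v) = phi x u + phi x v.
Proof. by rewrite /phi -big_split; apply: eq_bigr => k _; rewrite ffunE mulrDl. Qed.

Lemma phiZ x c u : phi x (scl c u) = c * phi x u.
Proof. by rewrite /phi mulr_sumr; apply: eq_bigr => k _; rewrite /scl ffunE mulrA. Qed.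

Lemma phi0 x : phi x 0 = 0.
Proof. by rewrite /phi big1 // => k _; rewrite ffunE mul0r. Qed.

Lemma phi_bvec x i : phi x (bvec i) = w x i.
Proof. exact: bvec_suml. Qed.

Lemma mulH_bvec i j k : mulH D (bvec i) (bvec j) k = hmu D i j k.
Proof.
rewrite ffunE. rewrite (eq_bigr (fun a => bvec i a * hmu D a j k)).
  exact: bvec_suml.
move=> a _; rewrite -(bvec_suml j (fun b => hmu D a b k)) mulr_sumr.
by apply: eq_bigr => b _; rewrite mulrA.
Qed.

Lemma wM x i j : \sum_k hmu D i j k * w x k = w x i * w x j.
Proof.
rewrite -!phi_bvec -phiM /phi; apply: eq_bigr => k _; by rewrite mulH_bvec.
Qed.

Lemma phi_pow x u k : phi x (powH D u k) = phi x u ^+ k.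
Proof. elim: k => [|k IH]; first by rewrite phi1 expr0. by rewrite /= phiM IH exprS. Qed.


Definition E2 x y (X : H2 d) := \sum_p X p * (w x p.1 * w y p.2).
Definition E3 x y z (X : H3 d) := \sum_p X p * (w x p.1.1 * w y p.1.2 * w z p.2).

Lemma E2_mul2 x y X Y : E2 x y (mul2 D X Y) = E2 x y X * E2 x y Y.
Proof.
transitivity (\sum_a \sum_b X a * Y b * ((w x a.1 * w x b.1) * (w y a.2 * w y b.2))).
  rewrite /E2.
  under eq_bigr do rewrite ffunE mulr_suml.
  rewrite exchange_big /=; apply: eq_bigr => a _.
  under eq_bigr do rewrite mulr_suml.
  rewrite exchange_big /=; apply: eq_bigr => b _.
  rewrite -!wM mulr_suml mulr_sumr sum_pairE; apply: eq_bigr => k _.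
  rewrite mulr_sumr mulr_sumr; apply: eq_bigr => l _ /=.
  ring.
rewrite /E2 mulr_suml; apply: eq_bigr => a _.
rewrite mulr_sumr; apply: eq_bigr => b _; ring.
Qed.

Lemma exch4 (A B C E : finType) (F : A -> B -> C -> E -> algC) :
  \sum_a \sum_b \sum_c \sum_e F a b c e = \sum_c \sum_e \sum_a \sum_b F a b c e.
Proof.
under eq_bigr do rewrite exchange_big /=.
rewrite exchange_big /=; apply: eq_bigr => c _.
under eq_bigr do rewrite exchange_big /=.
by rewrite exchange_big.
Qed.

Hypothesis picop : forall x s t,
  \sum_k \sum_l DeltaH D x (k, l) * piB k s * piB l t = (s == t)%:R * PI x s.

Lemma E2_delta y z h : E2 y z (DeltaH D h) = phi (y + z) h.
Proof.
transitivity (\sum_s \sum_t chi y s * chi z t *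
    \sum_k \sum_l DeltaH D h (k, l) * piB k s * piB l t).
  rewrite /E2 sum_pairE.
  transitivity (\sum_k \sum_l \sum_s \sum_t
     DeltaH D h (k, l) * (piB k s * chi y s) * (piB l t * chi z t)).
    apply: eq_bigr => k _; apply: eq_bigr => l _; rewrite !wE /= mulr_suml mulr_sumr.
    apply: eq_bigr => s _; rewrite mulr_sumr mulr_sumr; apply: eq_bigr => t _; ring.
  rewrite exch4; apply: eq_bigr => s _; apply: eq_bigr => t _.
  rewrite mulr_sumr; apply: eq_bigr => k _; rewrite mulr_sumr; apply: eq_bigr => l _.
  ring.
rewrite phi_pi; apply: eq_bigr => s _.
rewrite (bigD1 s) //= [X in _ + X]big1; last first.
  by move=> t Ht; rewrite picop eq_sym (negbTE Ht) !mul0r mulr0.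
rewrite picop eqxx mul1r addr0 /chi mulnDl exprD; ring.
Qed.

Lemma E2_tens2 x y u v : E2 x y (tens2 u v) = phi x u * phi y v.
Proof.
rewrite /E2 sum_pairE /phi mulr_suml; apply: eq_bigr => k _.
rewrite mulr_sumr; apply: eq_bigr => l _; rewrite ffunE /=; ring.
Qed.

Lemma E2_add x y X Y : E2 x y (X + Y) = E2 x y X + E2 x y Y.
Proof. by rewrite /E2 -big_split; apply: eq_bigr => p _; rewrite ffunE mulrDl. Qed.

Lemma E2_0 x y : E2 x y 0 = 0.
Proof. by rewrite /E2 big1 // => p _; rewrite ffunE mul0r. Qed.

Lemma E2_scl x y c X : E2 x y (scl c X) = c * E2 x y X.
Proof. by rewrite /E2 mulr_sumr; apply: eq_bigr => p _; rewrite /scl ffunE -mulrA. Qed.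

Lemma E2_sum x y (I : Type) (r : seq I) (P : pred I) (F : I -> H2 d) :
  E2 x y (\sum_(i <- r | P i) F i) = \sum_(i <- r | P i) E2 x y (F i).
Proof. exact: (big_morph _ (E2_add x y) (E2_0 x y)). Qed.

Lemma E2_one2 x y : E2 x y (one2 D) = 1.
Proof. by rewrite /one2 E2_tens2 !phi1 mulr1. Qed.

Lemma sum3_prod (I J K : finType) (F : I -> algC) (G : J -> algC) (H : K -> algC) :
  \sum_k \sum_l \sum_r F k * G l * H r = (\sum_k F k) * (\sum_l G l) * (\sum_r H r).
Proof.
rewrite mulr_suml mulr_suml; apply: eq_bigr => k _.
rewrite [F k * _]mulr_sumr mulr_suml; apply: eq_bigr => l _.
by rewrite mulr_sumr.
Qed.

Lemma E3_mul3 x y z X Y : E3 x y z (mul3 D X Y) = E3 x y z X * E3 x y z Y.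
Proof.
transitivity (\sum_a \sum_b X a * Y b * ((w x a.1.1 * w x b.1.1) *
     (w y a.1.2 * w y b.1.2) * (w z a.2 * w z b.2))).
  rewrite /E3.
  under eq_bigr do rewrite ffunE mulr_suml.
  rewrite exchange_big /=; apply: eq_bigr => a _.
  under eq_bigr do rewrite mulr_suml.
  rewrite exchange_big /=; apply: eq_bigr => b _.
  rewrite -!wM.
  transitivity (\sum_k \sum_l \sum_r X a * Y b * ((hmu D a.1.1 b.1.1 k * w x k) *
     (hmu D a.1.2 b.1.2 l * w y l) * (hmu D a.2 b.2 r * w z r))).
    rewrite !sum_pairE; apply: eq_bigr => k _; apply: eq_bigr => l _;
    apply: eq_bigr => r _ /=; ring.
  rewrite -sum3_prod mulr_sumr; apply: eq_bigr => k _.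
  rewrite [RHS]mulr_sumr; apply: eq_bigr => l _.
  rewrite [RHS]mulr_sumr; apply: eq_bigr => r _; ring.
rewrite /E3 mulr_suml; apply: eq_bigr => a _.
rewrite mulr_sumr; apply: eq_bigr => b _; ring.
Qed.

Lemma E3_tens1l x y z X : E3 x y z (tens1l D X) = E2 y z X.
Proof.
transitivity (phi x (oneH D) * E2 y z X); last by rewrite phi1 mul1r.
rewrite /E3 /E2 /phi !sum_pairE mulr_suml; apply: eq_bigr => k _.
rewrite mulr_sumr; apply: eq_bigr => l _.
rewrite mulr_sumr; apply: eq_bigr => r _; rewrite ffunE /=; ring.
Qed.

Lemma E3_tens1r x y z X : E3 x y z (tens1r D X) = E2 x y X.
Proof.
transitivity (E2 x y X * phi z (oneH D)); last by rewrite phi1 mulr1.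
rewrite /E3 /E2 /phi !sum_pairE mulr_suml; apply: eq_bigr => k _.
rewrite mulr_suml; apply: eq_bigr => l _.
rewrite mulr_sumr; apply: eq_bigr => r _; rewrite ffunE /=; ring.
Qed.

Lemma E3_one3 x y z : E3 x y z (one3 D) = 1.
Proof.
transitivity (phi x (oneH D) * phi y (oneH D) * phi z (oneH D)); last by rewrite !phi1 !mulr1.
rewrite /E3 /phi !sum_pairE -sum3_prod; apply: eq_bigr => k _.
apply: eq_bigr => l _; apply: eq_bigr => r _; rewrite ffunE /=; ring.
Qed.

Lemma E3_id_tens (f : H1 d -> H2 d) x y z X :
  (forall a, E2 y z (f (bvec a)) = w (y + z) a) ->
  E3 x y z (id_tens f X) = E2 x (y + z) X.
Proof.
move=> Hf.
transitivity (\sum_k \sum_a X (k, a) * w x k * E2 y z (f (bvec a))); last first.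
  have -> : E2 x (y + z) X = \sum_k \sum_a X (k, a) * (w x k * w (y + z) a).
    by rewrite /E2 sum_pairE.
  apply: eq_bigr => k _; apply: eq_bigr => a _.
  by rewrite Hf /=; ring.
rewrite /E3 !sum_pairE; apply: eq_bigr => k _.
transitivity (\sum_l \sum_r \sum_a X (k, a) * w x k * (f (bvec a) (l, r) * (w y l * w z r))).
  apply: eq_bigr => l _; apply: eq_bigr => r _; rewrite ffunE /= !mulr_suml.
  by apply: eq_bigr => a _; ring.
under eq_bigr do rewrite exchange_big /=.
rewrite exchange_big /=; apply: eq_bigr => a _.
rewrite /E2 sum_pairE mulr_sumr; apply: eq_bigr => l _.
by rewrite mulr_sumr.
Qed.

Lemma E3_tens_id (f : H1 d -> H2 d) x y z X :
  (forall a, E2 x y (f (bvec a)) = w (x + y) a) ->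
  E3 x y z (tens_id f X) = E2 (x + y) z X.
Proof.
move=> Hf.
transitivity (\sum_a \sum_r X (a, r) * w z r * E2 x y (f (bvec a))); last first.
  have -> : E2 (x + y) z X = \sum_a \sum_r X (a, r) * (w (x + y) a * w z r).
    by rewrite /E2 sum_pairE.
  apply: eq_bigr => a _; apply: eq_bigr => r _.
  by rewrite Hf /=; ring.
rewrite /E3 !sum_pairE.
transitivity (\sum_k \sum_l \sum_r \sum_a X (a, r) * w z r * (f (bvec a) (k, l) * (w x k * w y l))).
  apply: eq_bigr => k _; apply: eq_bigr => l _; apply: eq_bigr => r _.
  rewrite ffunE /= !mulr_suml; by apply: eq_bigr => a _; ring.
transitivity (\sum_k \sum_l \sum_a \sum_r X (a, r) * w z r * (f (bvec a) (k, l) * (w x k * w y l))).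
  apply: eq_bigr => k _; apply: eq_bigr => l _; exact: exchange_big.
rewrite exch4; apply: eq_bigr => a _; apply: eq_bigr => r _.
rewrite /E2 sum_pairE mulr_sumr; apply: eq_bigr => k _.
by rewrite mulr_sumr.
Qed.

Variables (g e : 'I_m -> H1 d) (a : 'I_m -> 'I_m -> 'I_(n ^ 2)) (Jinv : H2 d).
Hypothesis pig : forall i, PI (g i) = ga_delta (@ga_gen (n ^ 2) m i).
Hypothesis pie : forall i, PI (e i) = 0.
Hypothesis HJ1 : mul2 D (Jel D q g a) Jinv = one2 D.

Lemma phi_g x i : phi x (g i) = q ^+ (x * (i == i0)).
Proof.
rewrite phi_pi pig /ga_delta (bigD1 (ga_gen (n ^ 2) i)) //= [X in _ + X]big1; last first.
  by move=> t Ht; rewrite ffunE (negbTE Ht) mul0r.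
rewrite ffunE eqxx mul1r addr0 /chi /ga_gen ffunE.
by rewrite val_Zp_nat // modn_small //; apply: leq_ltn_trans HN; case: (i == i0).
Qed.

Lemma phi_e x i : phi x (e i) = 0.
Proof.
rewrite phi_pi pie big1 // => t _.
by rewrite ffunE mul0r.
Qed.

Lemma q_neq0 : q != 0.
Proof.
apply/eqP => q0; move: qN; rewrite q0 expr0n.
have -> : (n ^ 2 == 0)%N = false by rewrite eqn0Ngt (ltnW HN).
by move/eqP; rewrite eq_sym oner_eq0.
Qed.

Lemma rootsum (b j : nat) : (b < n ^ 2)%N -> (j < n ^ 2)%N ->
  (n ^ 2)%:R^-1 * \sum_(k < n ^ 2) q ^- (b * k) * (q ^+ j) ^+ k = (b == j)%:R.
Proof.
move=> hb hj.
have Nnz : (n ^ 2)%:R != 0 :> algC by rewrite pnatr_eq0 -lt0n ltnW.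
set r := (q ^+ b)^-1 * q ^+ j.
have Er : forall k : 'I_(n ^ 2), q ^- (b * k) * (q ^+ j) ^+ k = r ^+ k.
  by move=> k; rewrite /r exprMn exprVn -!exprM.
under eq_bigr do rewrite Er.
case: (eqVneq b j) => [Ebj|nbj].
  have -> : r = 1 by rewrite /r Ebj mulVf // expf_neq0 // q_neq0.
  under eq_bigr do rewrite expr1n.
  by rewrite sumr_const card_ord mulVf.
have rN : r ^+ (n ^ 2) = 1.
  have qpow : forall k, (q ^+ k) ^+ (n ^ 2) = 1.
    by move=> k; rewrite -exprM mulnC exprM qN expr1n.
  by rewrite /r exprMn exprVn !qpow invr1 mulr1.
have r1 : r - 1 != 0.
  rewrite subr_eq0 /r; apply/eqP => h.
  have : q ^+ j = q ^+ b.
    by rewrite -[RHS]mulr1 -h mulrA mulfV ?mul1r // expf_neq0 // q_neq0.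
  move/eqP.
  by rewrite (eq_prim_root_expr Hq) !modn_small // eq_sym (negbTE nbj).
have : (r - 1) * \sum_(k < n ^ 2) r ^+ k = 0 by rewrite -subrX1 rN subrr.
by move/eqP; rewrite mulf_eq0 (negbTE r1) /= => /eqP ->; rewrite mulr0.
Qed.

Lemma HN0 : (0 < n ^ 2)%N. Proof. exact: ltnW HN. Qed.

Definition xv x (Hx : (x < n ^ 2)%N) : {ffun 'I_m -> 'I_(n ^ 2)} :=
  [ffun i => if i == i0 then Ordinal Hx else Ordinal HN0].

Arguments xv : clear implicits.

Lemma xvE x Hx i : (xv x Hx i : nat) = (x * (i == i0))%N.
Proof. by rewrite ffunE; case: (i == i0); rewrite ?muln1 ?muln0. Qed.

Lemma phi_idem x (Hx : (x < n ^ 2)%N) (beta : {ffun 'I_m -> 'I_(n ^ 2)}) :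
  phi x (idem D q g beta) = (beta == xv x Hx)%:R.
Proof.
transitivity (\prod_i (((beta i : nat) == xv x Hx i)%:R : algC)).
  rewrite /idem (big_morph (phi x) (phiM x) (phi1 x)); apply: eq_bigr => i _.
  rewrite phiZ (big_morph (phi x) (phiD x) (phi0 x)).
  under eq_bigr => k _ do rewrite phiZ phi_pow phi_g.
  by rewrite rootsum ?ltn_ord //; rewrite -?xvE ?ltn_ord.
case: (eqVneq beta (xv x Hx)) => [->|neq].
  by rewrite big1 // => i _; rewrite eqxx.
have [i Hi] : exists i, (beta i : nat) != xv x Hx i.
  apply/existsP; rewrite -negb_forall; apply: contra neq => /forallP H.
  by apply/eqP/ffunP => i; apply/val_inj/eqP/H.
by rewrite (bigD1 i) //= (negbTE Hi) mul0r.
Qed.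

Lemma cfun0l y : cfun n q 0 y = 1.
Proof. by rewrite /cfun mul0n expr0 invr1. Qed.

Lemma cfun0r z : cfun n q z 0 = 1.
Proof. by rewrite /cfun mod0n subnn muln0 expr0 invr1. Qed.

Lemma E2_J x y (Hx : (x < n ^ 2)%N) (Hy : (y < n ^ 2)%N) :
  E2 x y (Jel D q g a) = cfun n q x y ^+ a i0 i0.
Proof.
rewrite /Jel E2_sum (bigD1 (xv x Hx)) //= [X in _ + X]big1; last first.
  move=> b Hb; rewrite E2_sum big1 // => c _.
  by rewrite E2_scl E2_tens2 !phi_idem (negbTE Hb) mul0r mulr0.
rewrite addr0 E2_sum (bigD1 (xv y Hy)) //= [X in _ + X]big1; last first.
  by move=> c Hc; rewrite E2_scl E2_tens2 !phi_idem (negbTE Hc) mulr0 mulr0.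
rewrite addr0 E2_scl E2_tens2 !phi_idem !eqxx mulr1 mulr1.
rewrite (bigD1 i0) //= [X in _ * X]big1; last first.
  by move=> i Hi; apply: big1 => j _; rewrite xvE (negbTE Hi) muln0 cfun0l expr1n.
rewrite mulr1 (bigD1 i0) //= [X in _ * X]big1; last first.
  by move=> j Hj; rewrite (xvE Hy) (negbTE Hj) muln0 cfun0r expr1n.
by rewrite mulr1 !xvE eqxx !muln1.
Qed.

Lemma E2_DeltaJ y z h : E2 y z (DeltaJ D q g a Jinv h) = phi (y + z) h.
Proof.
rewrite /DeltaJ !E2_mul2 E2_delta mulrAC -E2_mul2 HJ1 E2_one2 mul1r //.
Qed.

Hypothesis Hn2 : (2 <= n)%N.

Local Notation Agen := (fun s => exists i, s = powH D (g i) n \/ s = e i).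

Lemma phiA h : in_subalg D Agen h -> phi n h = phi 0 h.
Proof.
move=> Hh; apply: (Hh (fun h => phi n h = phi 0 h)).
- by rewrite !phi1.
- by move=> u v Hu Hv; rewrite !phiD Hu Hv.
- by move=> c u Hu; rewrite !phiZ Hu.
move=> s0 u [i [->|->]] Hu; rewrite !phiM Hu; last by rewrite !phi_e.
rewrite !phi_pow !phi_g mul0n expr0 expr1n -exprM.
case: (i == i0); last by rewrite muln0 expr0.
by rewrite muln1 mulnn qN.
Qed.

Lemma E2_tens_seq F : in_tens2 (in_subalg D Agen) F ->
  exists s : seq (H1 d * H1 d), (forall p, p \in s -> in_subalg D Agen p.1 /\ in_subalg D Agen p.2) /\
    forall x y, E2 x y F = \sum_(p <- s) phi x p.1 * phi y p.2.
Proof.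
move=> [s [Hs ->]]; exists s; split => // x' y'.
by rewrite E2_sum; apply: eq_bigr => p _; rewrite E2_tens2.
Qed.

Lemma E2_Finv_l F y : in_tens2 (in_subalg D Agen) F -> E2 n y F = E2 0 y F.
Proof.
move=> /E2_tens_seq [s [Hs HE]]; rewrite !HE.
by apply: eq_big_seq => p /Hs [H1 _]; rewrite phiA.
Qed.

Lemma E2_Finv_r F x : in_tens2 (in_subalg D Agen) F -> E2 x n F = E2 x 0 F.
Proof.
move=> /E2_tens_seq [s [Hs HE]]; rewrite !HE.
by apply: eq_big_seq => p /Hs [_ H2]; rewrite phiA.
Qed.

Lemma inv_of_prod (u v : algC) : u * v = 1 -> v = u^-1.
Proof.
move=> h; have u0 : u != 0 by apply/eqP => u0; move: h; rewrite u0 mul0r => /eqP; rewrite eq_sym oner_eq0.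
by rewrite -[v]mul1r -(mulVf u0) -mulrA h mulr1.
Qed.

Lemma E2_Jinv x y : E2 x y Jinv = (E2 x y (Jel D q g a))^-1.
Proof. by apply: inv_of_prod; rewrite -E2_mul2 HJ1 E2_one2. Qed.

Lemma ltn_n2 k : (k <= n)%N -> (k < n ^ 2)%N.
Proof.
move=> hk; apply: (leq_ltn_trans hk).
by rewrite -mulnn -{1}(muln1 n) ltn_mul2l ltnW.
Qed.

Lemma cfun_small k : (k < n)%N -> cfun n q 1 k = 1 /\ cfun n q k 1 = 1.
Proof.
move=> hk; rewrite /cfun modn_small // subnn muln0 expr0 invr1; split => //.
by rewrite modn_small ?(leq_trans _ Hn2) // subnn muln0 expr0 invr1.
Qed.

Lemma Omega k : (k < n)%N ->
  E3 1 k 1 (Phi D q g a Jinv) = cfun n q 1 k.+1 ^+ a i0 i0.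
Proof.
move=> hk.
have HD : forall y z b, E2 y z (DeltaH D (bvec b)) = w (y + z) b.
  by move=> y z b; rewrite E2_delta phi_bvec.
rewrite /Phi !E3_mul3 E3_tens1l (E3_id_tens _ _ (HD _ _)) (E3_tens_id _ _ (HD _ _)) E3_tens1r.
rewrite !E2_Jinv add1n addn1.
have h1 : (1 < n ^ 2)%N := HN.
rewrite !E2_J ?ltn_n2 ?(ltnW hk) //; last by apply: ltnW; apply: (leq_trans _ Hn2).
have [c1 c2] := cfun_small hk.
have hk1 : (k.+1 <= n)%N := hk.
rewrite c1 c2 expr1n mul1r invr1 mulr1.
have [c3 c4] : cfun n q 1 k.+1 = cfun n q 1 k.+1 /\ cfun n q k.+1 1 = 1.
  split => //; rewrite /cfun modn_small ?(leq_trans _ Hn2) // subnn muln0 expr0 invr1 //.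
rewrite c4 expr1n invr1 mulr1 //. all: by apply: ltnW.
Qed.

Lemma cfun_n : cfun n q 1 n = q ^- n.
Proof. by rewrite /cfun modnn subn0 mul1n. Qed.

Lemma bad (A : nat) : (A %% n != 0)%N -> cfun n q 1 n ^+ A != 1.
Proof.
move=> ha; rewrite cfun_n; apply/eqP => h.
have h' : q ^+ (n * A) = q ^+ 0.
  by rewrite expr0 exprM; move: h; rewrite exprVn => /eqP; rewrite invr_eq1 => /eqP.
move/eqP: h'; rewrite (eq_prim_root_expr Hq) mod0n => hd.
have : (n ^ 2 %| n * A)%N by rewrite /dvdn.
rewrite -mulnn dvdn_pmul2l ?(ltnW Hn2) // /dvdn.
by rewrite (negbTE ha).
Qed.

Lemma part1 : (a i0 i0 %% n != 0)%N -> Phi D q g a Jinv <> one3 D.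
Proof.
move=> ha hP.
have n0 : (0 < n)%N by apply: ltnW.
have := Omega (k := n.-1); rewrite prednK // => /(_ (leqnn n)).
rewrite hP E3_one3 => h; apply: (negP (bad ha)); by rewrite -h.
Qed.

Lemma part2 F Finv : in_tens2 (in_subalg D Agen) F -> in_tens2 (in_subalg D Agen) Finv ->
  mul2 D F Finv = one2 D -> (a i0 i0 %% n != 0)%N ->
  twistPhi D q g a Jinv F Finv <> one3 D.
Proof.
move=> HF HFi HFF ha hT.
have n0 : (0 < n)%N by apply: ltnW.
have FF x y : E2 x y F * E2 x y Finv = 1 by rewrite -E2_mul2 HFF E2_one2.
have HDJ : forall y z b, E2 y z (DeltaJ D q g a Jinv (bvec b)) = w (y + z) b.
  by move=> y z b; rewrite E2_DeltaJ phi_bvec.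
have rel k : (k < n)%N -> E2 k 1 F * E2 1 k.+1 F * cfun n q 1 k.+1 ^+ a i0 i0 *
    E2 k.+1 1 Finv * E2 1 k Finv = 1.
  move=> hk; have := congr1 (E3 1 k 1) hT.
  rewrite E3_one3 /twistPhi E3_mul3 E3_mul3 E3_mul3 E3_mul3 (Omega hk) E3_tens1l.
  by rewrite (E3_id_tens _ _ (HDJ _ _)) (E3_tens_id _ _ (HDJ _ _)) E3_tens1r add1n addn1.
pose S j := E2 j 1 F * E2 1 j Finv.
have step k : (k < n)%N -> S k * cfun n q 1 k.+1 ^+ a i0 i0 = S k.+1.
  move=> hk; rewrite /S.
  transitivity (E2 k 1 F * E2 1 k Finv * cfun n q 1 k.+1 ^+ a i0 i0 *
     (E2 1 k.+1 F * E2 1 k.+1 Finv) * (E2 k.+1 1 F * E2 k.+1 1 Finv)).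
    by rewrite !FF !mulr1.
  transitivity ((E2 k 1 F * E2 1 k.+1 F * cfun n q 1 k.+1 ^+ a i0 i0 *
    E2 k.+1 1 Finv * E2 1 k Finv) * (E2 k.+1 1 F * E2 1 k.+1 Finv)); first by ring.
  by rewrite rel // mul1r.
have Sconst j : (j < n)%N -> S j = S 0.
  elim: j => [//|j IH] hj.
  rewrite -step; last exact: ltnW.
  by rewrite (proj1 (cfun_small hj)) expr1n mulr1 IH // ltnW.
have Sn : S n = S 0 by rewrite /S E2_Finv_l // E2_Finv_r.
have S0 : S 0 != 0.
  apply/eqP => h0.
  have : S 0 * (E2 0 1 Finv * E2 1 0 F) = 1.
    rewrite /S; transitivity ((E2 0 1 F * E2 0 1 Finv) * (E2 1 0 F * E2 1 0 Finv)); first by ring.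
    by rewrite !FF mulr1.
  by rewrite h0 mul0r => /eqP; rewrite eq_sym oner_eq0.
have := step n.-1; rewrite prednK // => /(_ (leqnn n)).
rewrite Sconst ?prednK // ?Sn.
move=> h; apply: (negP (bad ha)).
by apply/eqP; apply: (mulfI S0); rewrite h mulr1.
Qed.

End Eval.

Theorem mainTheorem6
  (n m d : nat) (Hn : (2 <= n)%N) (Hm : (1 <= m)%N)
  (q : algC) (Hq : (n ^ 2).-primitive_root q)
  (D : HData d) (HH : is_hopf D)
  (g e : 'I_m -> H1 d) (a : 'I_m -> 'I_m -> 'I_(n ^ 2))
  (Hg_gl : forall i, grouplike D (g i))
  (Hg_ord : forall i, powH D (g i) (n ^ 2) = oneH D)
  (Hg_comm : forall i j, mulH D (g i) (g j) = mulH D (g j) (g i))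
  (Hge : forall i j, mulH D (g i) (e j) = scl (q ^+ (i == j)) (mulH D (e j) (g i)))
  (He : forall i, DeltaH D (e i)
                  = tens2 (e i) (Kel D g a i) + tens2 (oneH D) (e i))
  (Hgen : forall x : H1 d, in_subalg D (fun s => exists i, s = g i \/ s = e i) x)
  (Hproj : exists piB, @hopf_projection d D n m g e piB)
  (Jinv : H2 d)
  (HJ1 : mul2 D (Jel D q g a) Jinv = one2 D)
  (HJ2 : mul2 D Jinv (Jel D q g a) = one2 D)
  (Haii : exists i, (a i i %% n != 0)%N) :
  let A := in_subalg D (fun s => exists i, s = powH D (g i) n \/ s = e i) in
  Phi D q g a Jinv <> one3 D /\
  (forall F Finv : H2 d,
     in_tens2 A F -> in_tens2 A Finv ->
     mul2 D F Finv = one2 D -> mul2 D Finv F = one2 D ->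
     twistPhi D q g a Jinv F Finv <> one3 D).
Proof.
move=> A.
have [i0 ha] := Haii.
have [piB [pimul [pione [picop [_ [pig pie]]]]]] := Hproj.
have HN : (1 < n ^ 2)%N.
  by apply: (leq_trans Hn); rewrite -mulnn leq_pmulr // ltnW.
split.
  exact: (part1 (g:=g) (a:=a) (Jinv:=Jinv) HN Hq pimul pione picop pig HJ1 Hn ha).
move=> F Finv HF HFi HFF _.
exact: (part2 (g:=g) (e:=e) (a:=a) (Jinv:=Jinv) HN Hq pimul pione picop pig pie HJ1 Hn HF HFi HFF ha).
Qed.
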